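(* Let $\lambda>0$ be a constant and $\mu(t,x,y)$ a $C^\infty$ function on an open set $V\subset\mathbb{R}^3$, and let $U\subset V$ be a connected open set on which $\mu\neq\lambda$. On $U$ define the Riemannian metric $$g = (\lambda-\mu(t,x,y))^{-2}\,dt^2 + \lambda\,dx^2 + \lambda\,dy^2$$ and the $(1,1)$ tensor $A$ by $A(\partial_t)=\mu(t,x,y)\,\partial_t$, $A(\partial_x)=\lambda\,\partial_x$, $A(\partial_y)=\lambda\,\partial_y$. Then $A$ is a Codazzi tensor for $g$.
   Context: A symmetric $(1,1)$ tensor $A$ (self-adjoint with respect to $g$) is a Codazzi tensor if $(\nabla_X A)Y = (\nabla_Y A)X$ for all vector fields $X,Y$, where $\nabla$ is the Levi-Civita connection of $g$. *)

(* Defs.v *)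
From HB Require Import structures.
From mathcomp Require Import all_boot all_order all_algebra.
From mathcomp Require Import all_classical all_reals all_analysis.
Set Implicit Arguments. Unset Strict Implicit. Unset Printing Implicit Defensive.
Import Order.TTheory GRing.Theory Num.Theory.
Import numFieldNormedType.Exports.
Local Open Scope classical_set_scope.
Local Open Scope ring_scope.

Section Coords.
Variables (R : realType) (n : nat).

Definition coord_vec (i : 'I_n) : 'rV[R]_n := delta_mx 0 i.

Definition partial (i : 'I_n) (f : 'rV[R]_n -> R) (p : 'rV[R]_n) : R :=
  'D_(coord_vec i) f p.

Fixpoint Ck_on (k : nat) (V : set 'rV[R]_n) (f : 'rV[R]_n -> R) : Prop :=
  match k with
  | 0 => forall p, V p -> {for p, continuous f}
  | k'.+1 => (forall p, V p -> differentiable f p) /\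
             (forall i : 'I_n, Ck_on k' V (partial i f))
  end.

Definition smooth_on (V : set 'rV[R]_n) (f : 'rV[R]_n -> R) : Prop :=
  forall k, Ck_on k V f.

(* A metric is given by its coefficient matrix g p i j = g_ij(p) = g(d_i, d_j).
   A (1,1) tensor field A is given by A p k j = A^k_j(p), i.e.
   A(d_j) = sum_k A^k_j d_k. *)

Definition christoffel (g : 'rV[R]_n -> 'M[R]_n) (k i j : 'I_n) (p : 'rV[R]_n)
  : R :=
  2^-1 * \sum_(l < n) (invmx (g p)) k l *
    (partial i (fun q => g q j l) p + partial j (fun q => g q i l) p
     - partial l (fun q => g q i j) p).

(* Components of the covariant derivative of a (1,1) tensor:
   (nabla_i A)^k_j = d_i A^k_j + Gamma^k_il A^l_j - Gamma^l_ij A^k_l,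
   so that ((nabla_X A) Y)^k = X^i Y^j (nabla_i A)^k_j. *)
Definition cov_deriv (g : 'rV[R]_n -> 'M[R]_n) (A : 'rV[R]_n -> 'M[R]_n)
  (i k j : 'I_n) (p : 'rV[R]_n) : R :=
  partial i (fun q => A q k j) p
  + \sum_(l < n) christoffel g k i l p * A p l j
  - \sum_(l < n) christoffel g l i j p * A p k l.

Definition self_adjoint_on (U : set 'rV[R]_n) (g A : 'rV[R]_n -> 'M[R]_n)
  : Prop :=
  forall p, U p -> (A p)^T *m g p = g p *m A p.

Definition codazzi_on (U : set 'rV[R]_n) (g A : 'rV[R]_n -> 'M[R]_n) : Prop :=
  self_adjoint_on U g A /\
  forall p, U p -> forall i j k : 'I_n, cov_deriv g A i k j p = cov_deriv g A j k i p.

End Coords.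

(* The metric g = (lam - mu)^-2 dt^2 + lam dx^2 + lam dy^2 on R^3,
   coordinates (t, x, y) = indices (0, 1, 2). *)
Definition metric4p1 (R : realType) (lam : R) (mu : 'rV[R]_3 -> R) (p : 'rV[R]_3)
  : 'M[R]_3 :=
  diag_mx (\row_(i < 3) if i == 0 :> nat then (lam - mu p) ^- 2 else lam).

Definition tensor4p1 (R : realType) (lam : R) (mu : 'rV[R]_3 -> R) (p : 'rV[R]_3)
  : 'M[R]_3 :=
  diag_mx (\row_(i < 3) if i == 0 :> nat then mu p else lam).

(* Main.v *)
Require Import Defs.
From HB Require Import structures.
From mathcomp Require Import all_boot all_order all_algebra.
From mathcomp Require Import all_classical all_reals all_analysis.
From mathcomp Require Import ring lra.
Import Order.TTheory GRing.Theory Num.Theory.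
Import numFieldNormedType.Exports.
Local Open Scope classical_set_scope.
Local Open Scope ring_scope.

Lemma dinv2 (R : realType) (lam : R) (mu : 'rV[R]_3 -> R) p (v : 'rV[R]_3) :
  differentiable mu p -> mu p != lam ->
  'D_v (fun q => (lam - mu q) ^- 2) p = 2 * (lam - mu p)^-3 * 'D_v mu p.
Proof.
move=> dmu nl.
have hd : derivable (cst lam - mu) p v.
  apply: derivableB; [exact: derivable_cst | exact: diff_derivable].
have hD : 'D_v (cst lam - mu) p = - 'D_v mu p.
  rewrite deriveB; [|exact: derivable_cst | exact: diff_derivable].
  by rewrite derive_cst sub0r.
have n0 : lam - mu p != 0 by rewrite subr_eq0 eq_sym.
change ('D_v (fun q => (((cst lam - mu) * (cst lam - mu)) q)^-1) p = 2 * (lam - mu p)^-3 * 'D_v mu p).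
rewrite deriveV; last first.
  - exact: derivableM.
  - by rewrite /= mulf_neq0.
rewrite deriveM // hD /= -/(_ ^+ 2).
rewrite /GRing.scale /=.
change (- ((lam - mu p) * (lam - mu p)) ^- 2 *
  ((lam - mu p) * - 'D_v mu p + (lam - mu p) * - 'D_v mu p) =
  2 / (lam - mu p) ^+ 3 * 'D_v mu p).
by field.
Qed.

Lemma pmetric (R : realType) (lam : R) (mu : 'rV[R]_3 -> R) p (i j l : 'I_3) :
  differentiable mu p -> mu p != lam ->
  partial i (fun q => metric4p1 lam mu q j l) p =
  if (j == l) && (j == 0 :> nat) then 2 * (lam - mu p)^-3 * partial i mu p else 0.
Proof.
move=> dmu nl; rewrite /partial /metric4p1.
case: (boolP (j == l)) => /= [/eqP <-|jl].
  case: ifP => j0.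
    rewrite -dinv2 //; congr ('D_ _ _ _); apply/funext => q; by rewrite !mxE eqxx j0 mulr1n.
  have -> : (fun q => diag_mx (\row_(i0 < 3) (if i0 == 0 :> nat then (lam - mu q) ^- 2 else lam)) j j) = cst lam.
    by apply/funext => q; rewrite !mxE eqxx j0 mulr1n.
  exact: derive_cst.
have -> : (fun q => diag_mx (\row_(i0 < 3) (if i0 == 0 :> nat then (lam - mu q) ^- 2 else lam)) j l) = cst 0.
  by apply/funext => q; rewrite !mxE (negbTE jl) mulr0n.
exact: derive_cst.
Qed.

Lemma ptensor (R : realType) (lam : R) (mu : 'rV[R]_3 -> R) p (i j l : 'I_3) :
  partial i (fun q => tensor4p1 lam mu q j l) p =
  if (j == l) && (j == 0 :> nat) then partial i mu p else 0.
Proof.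
rewrite /partial /tensor4p1.
case: (boolP (j == l)) => /= [/eqP <-|jl].
  case: ifP => j0.
    congr ('D_ _ _ _); apply/funext => q; by rewrite !mxE eqxx j0 mulr1n.
  have -> : (fun q => diag_mx (\row_(i0 < 3) (if i0 == 0 :> nat then mu q else lam)) j j) = cst lam.
    by apply/funext => q; rewrite !mxE eqxx j0 mulr1n.
  exact: derive_cst.
have -> : (fun q => diag_mx (\row_(i0 < 3) (if i0 == 0 :> nat then mu q else lam)) j l) = cst 0.
  by apply/funext => q; rewrite !mxE (negbTE jl) mulr0n.
exact: derive_cst.
Qed.

Lemma tensorE (R : realType) (lam : R) (mu : 'rV[R]_3 -> R) p (j l : 'I_3) :
  tensor4p1 lam mu p j l = if j == l then (if j == 0 :> nat then mu p else lam) else 0.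
Proof. by rewrite /tensor4p1 !mxE; case: (j == l); rewrite ?mulr1n ?mulr0n. Qed.

Lemma invE (R : realType) (lam : R) (mu : 'rV[R]_3 -> R) p (j l : 'I_3) :
  lam != 0 -> mu p != lam ->
  invmx (metric4p1 lam mu p) j l =
  if j == l then (if j == 0 :> nat then (lam - mu p) ^+ 2 else lam^-1) else 0.
Proof.
move=> l0 nl.
have n0 : lam - mu p != 0 by rewrite subr_eq0 eq_sym.
set B := diag_mx (\row_(i0 < 3) (if i0 == 0 :> nat then (lam - mu p) ^+ 2 else lam^-1)).
have AB : metric4p1 lam mu p *m B = 1%:M.
  rewrite /metric4p1 /B mul_diag_mx; apply/matrixP => a b; rewrite !mxE.
  case: (a == b); rewrite ?mulr1n ?mulr0n ?mulr0 //.
  case: ifP => _; [rewrite mulVf // expf_neq0 // | rewrite mulfV //].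
have [U1 _] := mulmx1_unit AB.
have -> : invmx (metric4p1 lam mu p) = B.
  by rewrite -[RHS](mulKmx U1) AB mulmx1.
by rewrite /B !mxE; case: (j == l); rewrite ?mulr1n ?mulr0n.
Qed.


Lemma sum3 (R : realType) (F : 'I_3 -> R) :
  \sum_(l < 3) F l = F (@Ordinal 3 0 isT) + F (@Ordinal 3 1 isT) + F (@Ordinal 3 2 isT).
Proof. rewrite !big_ord_recr big_ord0 /= add0r; congr (F _ + F _ + F _); exact: val_inj. Qed.

Lemma chrE (R : realType) (lam : R) (mu : 'rV[R]_3 -> R) p (k i j : 'I_3) :
  lam != 0 -> differentiable mu p -> mu p != lam ->
  christoffel (metric4p1 lam mu) k i j p =
  if k == 0 :> nat then
    ((j == 0 :> nat)%:R * partial i mu p + (i == 0 :> nat)%:R * partial j mu p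
     - ((i == 0 :> nat) && (j == 0 :> nat))%:R * partial k mu p) / (lam - mu p)
  else - ((i == 0 :> nat) && (j == 0 :> nat))%:R * partial k mu p / (lam - mu p)^+3 / lam.
Proof.
move=> l0 dmu nl.
have n0 : lam - mu p != 0 by rewrite subr_eq0 eq_sym.
rewrite /christoffel sum3 !pmetric // !invE //.
case: i => [[|[|[|?]]] Hi] //; case: j => [[|[|[|?]]] Hj] //; case: k => [[|[|[|?]]] Hk] //=;
  rewrite ?(bool_irrelevance Hi isT) ?(bool_irrelevance Hj isT) ?(bool_irrelevance Hk isT).
all: set d0 := partial (Ordinal (n:=3) (m:=0) isT) mu p;
  set d1 := partial (Ordinal (n:=3) (m:=1) isT) mu p;
  set d2 := partial (Ordinal (n:=3) (m:=2) isT) mu p.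
all: move: d0 d1 d2 (mu p) n0 => d0 d1 d2 m n0.
all: (field; by rewrite ?n0 ?l0).
Qed.
Lemma covE (R : realType) (lam : R) (mu : 'rV[R]_3 -> R) p (i k j : 'I_3) :
  cov_deriv (metric4p1 lam mu) (tensor4p1 lam mu) i k j p =
  partial i (fun q => tensor4p1 lam mu q k j) p +
  christoffel (metric4p1 lam mu) k i j p *
    ((if j == 0 :> nat then mu p else lam) - (if k == 0 :> nat then mu p else lam)).
Proof.
rewrite /cov_deriv (bigD1 j) //= big1 => [|l /negbTE lj]; last by rewrite tensorE lj mulr0.
rewrite (bigD1 k) //= big1 => [|l /negbTE lk]; last by rewrite tensorE eq_sym lk mulr0.
by rewrite !tensorE !eqxx !addr0 mulrBr addrA.
Qed.

Theorem proposition4p1 (R : realType) (lam : R) (mu : 'rV[R]_3 -> R)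
    (V U : set 'rV[R]_3) :
  0 < lam ->
  open V -> smooth_on V mu ->
  open U -> connected U -> U `<=` V ->
  (forall p, U p -> mu p != lam) ->
  codazzi_on U (metric4p1 lam mu) (tensor4p1 lam mu).
Proof.
move=> lam0 _ smu _ _ UV nl; split.
  move=> p _; rewrite /tensor4p1 /metric4p1 tr_diag_mx; exact: diag_mx_comm.
move=> p Up i j k.
have dmu : differentiable mu p by have [+ _] := smu 1%N; apply; exact: UV.
have nlp := nl p Up.
have l0 : lam != 0 by rewrite gt_eqF.
have n0 : lam - mu p != 0 by rewrite subr_eq0 eq_sym.
rewrite !covE.
rewrite !ptensor.
rewrite !chrE //.

case: i => [[|[|[|i']]] Hi]; case: j => [[|[|[|j']]] Hj]; case: k => [[|[|[|k']]] Hk].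
all: try (exfalso; move: Hi; apply/negP; by []).
all: try (exfalso; move: Hj; apply/negP; by []).
all: try (exfalso; move: Hk; apply/negP; by []).
all: rewrite ?(bool_irrelevance Hi isT) ?(bool_irrelevance Hj isT) ?(bool_irrelevance Hk isT).
all: set d0 := partial (Ordinal (n:=3) (m:=0) isT) mu p;
  set d1 := partial (Ordinal (n:=3) (m:=1) isT) mu p;
  set d2 := partial (Ordinal (n:=3) (m:=2) isT) mu p.
all: move: d0 d1 d2 (mu p) n0 => d0 d1 d2 m n0.
all: rewrite /=.
all: (field; by rewrite ?n0 ?l0).
Qed.
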